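(* Let $\mathcal S$ be a finite subset of the unit sphere $\mathbb S^{n-1}\subset\mathbb R^n$ such that $\mathrm{Span}_{\mathbb R}\mathcal S=\mathbb R^n$ and $-v\in\mathcal S$ whenever $v\in\mathcal S$. Then there exist a basis $\mathcal B$ of $\mathbb R^n$ contained in $\mathcal S$ and linear maps $F:\mathbb R^n\to\mathbb R^n$ arbitrarily close to the identity such that for all $v\in\mathcal S$: $|Fv|=|v|$ if $v\in\mathcal B$ or $-v\in\mathcal B$, and $|Fv|>|v|$ otherwise.
   Context: $|\cdot|$ is the euclidean norm on $\mathbb R^n$. *)

(* Defs.v *)
(* R^n is modelled as row vectors 'rV[R]_n over an
   arbitrary real closed field R (the statement is first-order, so this is
   a generalization of the real case by Tarski transfer). *)
From HB Require Import structures.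
From mathcomp Require Import all_boot all_order all_algebra.
Set Implicit Arguments. Unset Strict Implicit. Unset Printing Implicit Defensive.
Import Order.TTheory GRing.Theory Num.Theory.
Local Open Scope ring_scope.

Definition enorm (R : rcfType) (n : nat) (v : 'rV[R]_n) : R :=
  Num.sqrt (\sum_(i < n) (v 0 i) ^+ 2).

(* Main.v *)
Require Import Defs.
From HB Require Import structures.
From mathcomp Require Import all_boot all_order all_algebra.
Set Implicit Arguments. Unset Strict Implicit. Unset Printing Implicit Defensive.
Import Order.TTheory GRing.Theory Num.Theory.
Local Open Scope ring_scope.

Definition Mof {R : rcfType} {n} (S : seq 'rV[R]_n) (g : 'I_n -> 'I_(size S)) : 'M[R]_n :=
  \matrix_(i, j) S`_(g i) 0 j.
Arguments Mof {R n} S g.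

Lemma row_Mof (R : rcfType) n (S : seq 'rV[R]_n) g i : row i (Mof S g) = S`_(g i).
Proof. by apply/rowP => j; rewrite !mxE. Qed.

Lemma exists_unit (R : rcfType) n (S : seq 'rV[R]_n) (hspan : <<S>>%VS = fullv) :
  exists g : {ffun 'I_n -> 'I_(size S)}, \det (Mof S g) != 0.
Proof.
pose Sm : 'M[R]_(size S, n) := \matrix_(i, j) S`_i 0 j.
have rf : row_full Sm.
  rewrite -sub1mx; apply/row_subP => i.
  have : row i (1%:M : 'M[R]_n) \in <<in_tuple S>>%VS by rewrite /= hspan memvf.
  move/coord_span => ->.
  set c := coord _.
  have -> : \sum_i0 c i0 (row i 1%:M) *: (in_tuple S)`_i0 = (\row_k c k (row i 1%:M)) *m Sm.
    rewrite mulmx_sum_row; apply: eq_bigr => k _; rewrite mxE; congr (_ *: _).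
    by apply/rowP => j; rewrite !mxE.
  by rewrite submxMl.
exists (fullrankfun rf).
have := fullrowsub_unit rf; rewrite unitmxE unitfE.
congr (_ != 0); congr (\det _); apply/matrixP => i j; rewrite !mxE //.
Qed.

Lemma exists_min (R : rcfType) n (S : seq 'rV[R]_n) (hspan : <<S>>%VS = fullv) :
  exists g : {ffun 'I_n -> 'I_(size S)}, \det (Mof S g) != 0 /\
    forall h : {ffun 'I_n -> 'I_(size S)}, \det (Mof S h) != 0 ->
      `|\det (Mof S g)| <= `|\det (Mof S h)|.
Proof.
have [g0 Hg0] := exists_unit hspan.
case: (@arg_minP _ _ _ g0 (fun h : {ffun 'I_n -> 'I_(size S)} => \det (Mof S h) != 0)
   (fun h => `|\det (Mof S h)|) Hg0) => g Hg Hmin.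
by exists g; split.
Qed.

Definition rowrep {R : rcfType} {n} (M : 'M[R]_n) k (v : 'rV[R]_n) : 'M[R]_n :=
  \matrix_(i, j) if i == k then v 0 j else M i j.

Lemma det_rowrep (R : rcfType) n (M : 'M[R]_n) k v : M \in unitmx ->
  \det (rowrep M k v) = (v *m invmx M) 0 k * \det M.
Proof.
move=> uM.
rewrite (expand_det_row _ k) /invmx uM -scalemxAr mxE mulrAC mulVf ?mul1r; last first.
  by rewrite -unitfE -unitmxE.
rewrite mxE; apply: eq_bigr => j _.
rewrite mxE eqxx mxE; congr (_ * _).
rewrite /cofactor; congr (_ * _); congr (\det _); apply/matrixP => a b.
by rewrite !mxE eq_sym (negbTE (neq_lift _ _)).
Qed.

Definition dot {R : rcfType} {n} (x y : 'rV[R]_n) : R := (x *m y^T) 0 0.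

Lemma dotE (R : rcfType) n (x y : 'rV[R]_n) : dot x y = \sum_l x 0 l * y 0 l.
Proof. by rewrite /dot mxE; apply: eq_bigr => l _; rewrite mxE. Qed.

Lemma dotC (R : rcfType) n (x y : 'rV[R]_n) : dot x y = dot y x.
Proof. by rewrite !dotE; apply: eq_bigr => l _; rewrite mulrC. Qed.

Lemma dotDr (R : rcfType) n (x y z : 'rV[R]_n) : dot x (y + z) = dot x y + dot x z.
Proof. by rewrite !dotE -big_split; apply: eq_bigr => l _; rewrite mxE mulrDr. Qed.

Lemma dotZr (R : rcfType) n a (x y : 'rV[R]_n) : dot x (a *: y) = a * dot x y.
Proof. by rewrite !dotE mulr_sumr; apply: eq_bigr => l _; rewrite mxE mulrCA. Qed.

Lemma dotDl (R : rcfType) n (x y z : 'rV[R]_n) : dot (y + z) x = dot y x + dot z x.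
Proof. by rewrite dotC dotDr !(dotC x). Qed.

Lemma dotZl (R : rcfType) n a (x y : 'rV[R]_n) : dot (a *: y) x = a * dot y x.
Proof. by rewrite dotC dotZr dotC. Qed.

Lemma dotNl (R : rcfType) n (x y : 'rV[R]_n) : dot (- y) x = - dot y x.
Proof. by rewrite -scaleN1r dotZl mulN1r. Qed.

Lemma dot_ge0 (R : rcfType) n (x : 'rV[R]_n) : 0 <= dot x x.
Proof. by rewrite dotE; apply: sumr_ge0 => l _; rewrite -expr2 sqr_ge0. Qed.

Lemma enormE (R : rcfType) n (x : 'rV[R]_n) : enorm x = Num.sqrt (dot x x).
Proof. by rewrite /enorm dotE; congr Num.sqrt; apply: eq_bigr => l _; rewrite expr2. Qed.

Lemma dot_mulr (R : rcfType) n m (v : 'rV[R]_n) (u : 'rV[R]_m) (A : 'M[R]_(m, n)) :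
  dot v (u *m A) = \sum_k u 0 k * dot v (row k A).
Proof.
rewrite dotE.
under eq_bigr => l _ do rewrite mxE big_distrr /=.
rewrite exchange_big /=; apply: eq_bigr => k _.
rewrite dotE big_distrr /=; apply: eq_bigr => l _; rewrite !mxE.
by rewrite mulrCA.
Qed.

Lemma dot_rows (R : rcfType) n m p (A : 'M[R]_(m, n)) (B : 'M[R]_(p, n)) i j :
  dot (row i A) (row j B) = (A *m B^T) i j.
Proof. by rewrite dotE mxE; apply: eq_bigr => l _; rewrite !mxE. Qed.

Lemma coord_sq_gt1 (R : rcfType) n (M : 'M[R]_n) (c : 'rV[R]_n)
  (hc : forall k, c 0 k != 0 -> 1 <= `|c 0 k|)
  (hv : dot (c *m M) (c *m M) = 1)
  (hnot : forall k, c *m M != row k M /\ c *m M != - row k M) :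
  1 < dot c c.
Proof.
rewrite ltNge; apply/negP => hle.
have [k hk] : exists k, c 0 k != 0.
  have [k0 hk0|h0] := pickP (fun k : 'I_n => c 0 k != 0); first by exists k0.
  have c0 : c = 0 by apply/rowP => k; rewrite mxE; move/negbFE/eqP: (h0 k).
  have : dot (c *m M) (c *m M) = 0.
    by rewrite c0 mul0mx dotE big1 // => l _; rewrite mxE mul0r.
  by rewrite hv => /eqP; rewrite oner_eq0.
have hk1 : 1 <= c 0 k * c 0 k.
  by rewrite -expr2 -(real_normK (num_real _)) expr_ge1 // hc.
have hsplit := dotE c c; rewrite (bigD1 k) //= in hsplit.
have hrest0 : \sum_(i | i != k) c 0 i * c 0 i = 0.
  apply/le_anti/andP; split; last by apply: sumr_ge0 => i _; rewrite -expr2 sqr_ge0.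
  by rewrite -(lerD2l (c 0 k * c 0 k)) addr0 -hsplit (le_trans hle).
have ci0 : forall i, i != k -> c 0 i = 0.
  move=> i hi.
  have hge : forall j, j != k -> 0 <= c 0 j * c 0 j by move=> j _; rewrite -expr2 sqr_ge0.
  have /eqP := psumr_eq0P hge hrest0 hi.
  by rewrite mulf_eq0 orbb => /eqP.
have hk2 : c 0 k ^+ 2 = 1.
  rewrite expr2; apply/le_anti/andP; split => //.
  by rewrite (le_trans _ hle) // hsplit hrest0 addr0.
have hcM : c *m M = c 0 k *: row k M.
  rewrite mulmx_sum_row (bigD1 k) //= big1 ?addr0 // => i hi.
  by rewrite ci0 // scale0r.
have [h1 h2] := hnot k.
move/eqP: hk2; rewrite sqrf_eq1 => /orP[] /eqP hck.
  by move: h1; rewrite hcM hck scale1r eqxx.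
by move: h2; rewrite hcM hck scaleN1r eqxx.
Qed.

Lemma isqrt_bound (R : rcfType) (x : R) : 0 <= x ->
  0 < (Num.sqrt (1 + x))^-1 /\ `|(Num.sqrt (1 + x))^-1 - 1| <= x.
Proof.
move=> x0; set r := Num.sqrt (1 + x).
have r1 : 1 <= r.
  by rewrite /r -{1}sqrtr1 ler_sqrt ?lerDl // addr_ge0.

have r0 : 0 < r by apply: lt_le_trans r1.
have ri1 : r^-1 <= 1 by rewrite invf_le1.
split; first by rewrite invr_gt0.
rewrite distrC ger0_norm ?subr_ge0 //.
have -> : 1 - r^-1 = (r - 1) * r^-1.
  by rewrite mulrBl mul1r divff // gt_eqF.
apply: (le_trans (y := (r - 1) * 1)).
  by rewrite ler_wpM2l // subr_ge0.
rewrite mulr1 lerBlDr.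
have : r ^+ 2 = 1 + x by rewrite sqr_sqrtr // addr_ge0 // ler01.
move=> h; apply: (le_trans (y := r ^+ 2)); last by rewrite h addrC.
by rewrite expr2 ler_peMl // ltW.
Qed.

Lemma combine (R : rcfType) (T : eqType) (s : seq T) (P : T -> R -> Prop) :
  (forall x, x \in s -> exists2 d, 0 < d & forall t, 0 < t -> t < d -> P x t) ->
  exists2 d, 0 < d & forall t, 0 < t -> t < d -> forall x, x \in s -> P x t.
Proof.
elim: s => [|a s IH] H.
  by exists 1 => // t _ _ x; rewrite in_nil.
have [d1 d10 H1] := H a (mem_head _ _).
have [d2 d20 H2] : exists2 d, 0 < d & forall t, 0 < t -> t < d -> forall x, x \in s -> P x t.
  by apply: IH => x xs; apply: H; rewrite in_cons xs orbT.
exists (Num.min d1 d2); first by rewrite lt_min d10.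
move=> t t0; rewrite lt_min => /andP[t1 t2] x; rewrite in_cons => /orP[/eqP -> | xs].
  exact: H1.
exact: H2.
Qed.

Definition Zm {R : rcfType} {n} (M : 'M[R]_n) : 'M[R]_n := (invmx M)^T - M.
Definition qk {R : rcfType} {n} (M : 'M[R]_n) k : R := dot (row k (Zm M)) (row k (Zm M)).
Definition dd {R : rcfType} {n} (M : 'M[R]_n) (s : R) k : R :=
  (Num.sqrt (1 + s ^+ 2 * qk M k))^-1.
Definition Am {R : rcfType} {n} (M : 'M[R]_n) (s : R) : 'M[R]_n := M + s *: Zm M.
Definition Wm {R : rcfType} {n} (M : 'M[R]_n) (s : R) : 'M[R]_n :=
  diag_mx (\row_k dd M s k) *m Am M s.
Definition Fm {R : rcfType} {n} (M : 'M[R]_n) (s : R) : 'M[R]_n := invmx M *m Wm M s.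

Lemma qk_ge0 (R : rcfType) n (M : 'M[R]_n) k : 0 <= qk M k.
Proof. exact: dot_ge0. Qed.

Lemma row_Fm (R : rcfType) n (M : 'M[R]_n) s k : M \in unitmx ->
  row k M *m Fm M s = row k (Wm M s).
Proof.
move=> uM; rewrite /Fm -row_mul mulmxA mulmxV // mul1mx //.
Qed.

Lemma row_Wm (R : rcfType) n (M : 'M[R]_n) s k :
  row k (Wm M s) = dd M s k *: (row k M + s *: row k (Zm M)).
Proof. by apply/rowP => j; rewrite /Wm mul_diag_mx !mxE. Qed.

Lemma dot_MZ (R : rcfType) n (M : 'M[R]_n) k : M \in unitmx ->
  dot (row k M) (row k M) = 1 -> dot (row k M) (row k (Zm M)) = 0.
Proof.
move=> uM h1; rewrite dot_rows /Zm.
have -> : ((invmx M)^T - M)^T = invmx M - M^T by rewrite raddfB /= trmxK.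
rewrite mulmxBr mulmxV //.
have -> : (1%:M - M *m M^T) k k = 1%:M k k - (M *m M^T) k k by rewrite !mxE.
by rewrite -dot_rows h1 mxE eqxx /= subrr.
Qed.

Lemma norm_Wrow (R : rcfType) n (M : 'M[R]_n) s k : M \in unitmx ->
  dot (row k M) (row k M) = 1 -> dot (row k (Wm M s)) (row k (Wm M s)) = 1.
Proof.
move=> uM h1; rewrite row_Wm dotZl dotZr !dotDl !dotDr !dotZl !dotZr.
rewrite h1 (dotC _ (row k M)) dot_MZ // !mulr0 addr0 add0r.
rewrite -/(qk M k) mulrA -expr2 /dd exprVn sqr_sqrtr; last first.
  by rewrite addr_ge0 // mulr_ge0 ?sqr_ge0 ?qk_ge0.
by rewrite mulrA -expr2 mulVf // gt_eqF // ltr_pwDl // mulr_ge0 ?sqr_ge0 ?qk_ge0.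
Qed.

Lemma gamma_eq (R : rcfType) n (M : 'M[R]_n) (v : 'rV[R]_n) : M \in unitmx ->
  dot v ((v *m invmx M) *m Zm M) = dot (v *m invmx M) (v *m invmx M) - dot v v.
Proof.
move=> uM; set c := v *m invmx M.
have vc : c *m M = v by rewrite /c mulmxKV.
rewrite /dot trmx_mul /Zm.
have -> : ((invmx M)^T - M)^T = invmx M - M^T by rewrite raddfB /= trmxK.
rewrite mulmxBl mulmxBr mulmxA -/c -trmx_mul vc.
by rewrite !mxE.
Qed.

Lemma row_Am (R : rcfType) n (M : 'M[R]_n) s k :
  row k (Am M s) = row k M + s *: row k (Zm M).
Proof. by apply/rowP => j; rewrite !mxE. Qed.

Lemma growth (R : rcfType) n (M : 'M[R]_n) (v : 'rV[R]_n) : M \in unitmx ->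
  dot v v = 1 -> 1 < dot (v *m invmx M) (v *m invmx M) ->
  exists2 d, 0 < d & forall s, 0 < s -> s < d ->
     1 < dot (v *m Fm M s) (v *m Fm M s).
Proof.
move=> uM hv hc.
set c := v *m invmx M.
have vc : c *m M = v by rewrite /c mulmxKV.
set g := dot c c - 1.
have g0 : 0 < g by rewrite /g subr_gt0.
pose al k := dot v (row k M).
pose be k := dot v (row k (Zm M)).
set K := \sum_k `|c 0 k| * qk M k * (`|al k| + `|be k|).
have K0 : 0 <= K.
  by apply: sumr_ge0 => k _; rewrite !mulr_ge0 ?qk_ge0 ?addr_ge0.
have K1 : 0 < K + 1 by rewrite ltr_wpDl.
exists (Num.min 1 (g / (K + 1))); first by rewrite lt_min ltr01 divr_gt0.
move=> s s0; rewrite lt_min => /andP[s1 sK].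
rewrite ltr_pdivlMr // in sK.
set u : 'rV[R]_n := \row_k (c 0 k * (dd M s k - 1)).
have hvF : v *m Fm M s = v + (s *: (c *m Zm M) + u *m Am M s).
  rewrite /Fm /Wm mulmxA -/c mulmxA.
  have -> : c *m diag_mx (\row_k dd M s k) = c + u.
    by apply/rowP => k; rewrite mul_mx_diag !mxE mulrBr mulr1 addrC subrK.
  by rewrite mulmxDl {1}/Am mulmxDr -scalemxAr vc addrA.
set E := s *: (c *m Zm M) + u *m Am M s.
have hbound : `|dot v (u *m Am M s)| <= s ^+ 2 * K.
  rewrite dot_mulr /K mulr_sumr.
  apply: (le_trans (ler_norm_sum _ _ _)); apply: ler_sum => k _.
  rewrite normrM row_Am dotDr dotZr -/(al k) -/(be k).
  have [_ hd] := isqrt_bound (mulr_ge0 (sqr_ge0 s) (qk_ge0 M k)).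
  have hu : `|u 0 k| <= `|c 0 k| * (s ^+ 2 * qk M k).
    by rewrite mxE normrM ler_wpM2l.
  have hab : `|al k + s * be k| <= `|al k| + `|be k|.
    apply: (le_trans (ler_normD _ _)); rewrite lerD2l normrM gtr0_norm //.
    by rewrite ler_piMl // ltW.
  apply: (le_trans (ler_pM (normr_ge0 _) (normr_ge0 _) hu hab)).
  rewrite mulrA (mulrC `|c 0 k|) -!mulrA.
  by [].
have hvE : 0 < dot v E.
  rewrite /E dotDr dotZr gamma_eq // -/c hv -/g.
  have : - (s ^+ 2 * K) <= dot v (u *m Am M s).
    by rewrite lerNl; apply: (le_trans _ hbound); rewrite -normrN ler_norm.
  move=> hl; apply: (lt_le_trans _ (lerD (lexx _) hl)).
  rewrite subr_gt0 expr2 -mulrA ltr_pM2l //.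
  apply: (le_lt_trans _ sK); rewrite mulrDr mulr1 lerDl; exact: ltW.
rewrite hvF -/E; move: hvE; clearbody E => hvE.
rewrite dotDl !dotDr hv (dotC E v) -addrA ltrDl.
by rewrite addr_gt0 // ltr_wpDr // dot_ge0.
Qed.

Lemma entry_bound (R : rcfType) (d a z s q : R) : 0 < s -> s <= 1 -> 0 <= q ->
  `|d - 1| <= s ^+ 2 * q -> `|d * (a + s * z) - a| <= s * (`|z| + q * (`|a| + `|z|)).
Proof.
move=> s0 s1 q0 hd.
have -> : d * (a + s * z) - a = s * z + (d - 1) * (a + s * z).
  by rewrite mulrBl mul1r addrCA opprD [s * z + _]addrCA subrr addr0.
apply: (le_trans (ler_normD _ _)); rewrite [in X in _ <= X]mulrDr.
apply: lerD; first by rewrite normrM gtr0_norm.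
rewrite normrM.
have ha : `|a + s * z| <= `|a| + `|z|.
  apply: (le_trans (ler_normD _ _)); rewrite lerD2l normrM gtr0_norm //.
  by rewrite ler_piMl // ltW.
apply: (le_trans (ler_pM (normr_ge0 _) (normr_ge0 _) hd ha)).
rewrite -mulrA; apply: ler_wpM2r; first by rewrite mulr_ge0 // addr_ge0.
by rewrite expr2 ler_piMl // ltW.
Qed.

Lemma close_entry (R : rcfType) n (M : 'M[R]_n) (eps : R) i j : M \in unitmx -> 0 < eps ->
  exists2 d, 0 < d & forall s, 0 < s -> s < d ->
    `|Fm M s i j - (1%:M : 'M[R]_n) i j| < eps.
Proof.
move=> uM e0.
set C := \sum_k `|invmx M i k| * (`|Zm M k j| + qk M k * (`|M k j| + `|Zm M k j|)).
have C0 : 0 <= C.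
  by apply: sumr_ge0 => k _; rewrite mulr_ge0 // addr_ge0 // mulr_ge0 ?qk_ge0 // addr_ge0.
have C1 : 0 < C + 1 by rewrite ltr_wpDl.
exists (Num.min 1 (eps / (C + 1))); first by rewrite lt_min ltr01 divr_gt0.
move=> s s0; rewrite lt_min => /andP[s1 sC].
rewrite ltr_pdivlMr // in sC.
have -> : (1%:M : 'M[R]_n) i j = (invmx M *m M) i j by rewrite mulVmx.
rewrite /Fm !mxE -sumrB.
apply: (le_lt_trans (ler_norm_sum _ _ _)).
apply: (le_lt_trans (y := s * C)); last first.
  apply: (le_lt_trans _ sC); apply: ler_wpM2l; [exact: ltW | by rewrite lerDl].
rewrite /C mulr_sumr; apply: ler_sum => k _.
rewrite -mulrBr normrM mulrCA ler_wpM2l //.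
have [_ hd] := isqrt_bound (mulr_ge0 (sqr_ge0 s) (qk_ge0 M k)).
rewrite /Wm mul_diag_mx !mxE.
exact: entry_bound (ltW s1) (qk_ge0 M k) hd.
Qed.

Lemma close_all (R : rcfType) n (M : 'M[R]_n) (eps : R) : M \in unitmx -> 0 < eps ->
  exists2 d, 0 < d & forall s, 0 < s -> s < d ->
    forall i j, `|Fm M s i j - (1%:M : 'M[R]_n) i j| < eps.
Proof.
move=> uM e0.
have [d d0 H] := @combine R _ (enum {: 'I_n * 'I_n})
  (fun p s => `|Fm M s p.1 p.2 - (1%:M : 'M[R]_n) p.1 p.2| < eps)
  (fun p _ => close_entry p.1 p.2 uM e0).
exists d => // s s0 sd i j.
exact: (H s s0 sd (i, j) (mem_enum _ _)).
Qed.

Lemma unit_dot (R : rcfType) n (v : 'rV[R]_n) : enorm v = 1 -> dot v v = 1.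
Proof.
rewrite enormE => h.
by rewrite -(sqr_sqrtr (dot_ge0 v)) h expr1n.
Qed.

Lemma dotNN (R : rcfType) n (x : 'rV[R]_n) : dot (- x) (- x) = dot x x.
Proof. by rewrite dotNl dotC dotNl opprK. Qed.

Unset Implicit Arguments.
Set Strict Implicit.
Set Printing Implicit Defensive.

Theorem mainTheorem6 (R : rcfType) (n : nat) (S : seq 'rV[R]_n)
  (hunit : forall v, v \in S -> enorm v = 1)
  (hspan : (<<S>>)%VS = fullv)
  (hsym : forall v, v \in S -> - v \in S) :
  exists B : seq 'rV[R]_n,
    [/\ basis_of fullv B, {subset B <= S} &
      forall eps : R, 0 < eps ->
        exists F : 'M[R]_n,
          (forall i j, `|F i j - (1%:M : 'M[R]_n) i j| < eps) /\
          (forall v, v \in S ->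
             if (v \in B) || (- v \in B)
             then enorm (v *m F) = enorm v
             else enorm v < enorm (v *m F))].
Proof.
have [g [hg hmin]] := exists_min hspan.
set M := Mof S g.
have uM : M \in unitmx by rewrite unitmxE unitfE.
have inS : forall k, row k M \in S by move=> k; rewrite row_Mof mem_nth.
have hrows : forall k, dot (row k M) (row k M) = 1.
  by move=> k; apply: unit_dot; apply: hunit.
set B := [seq row i M | i <- enum 'I_n].
exists B; split.
- rewrite basisEdim; apply/andP; split.
    apply/subvP => x _.
    rewrite -(mulmxKV uM x) mulmx_sum_row.
    apply: memv_suml => i _; apply: memvZ; apply: memv_span.
    by apply: map_f; rewrite mem_enum.
  by rewrite size_map size_enum_ord dimvf (dim_matrix R 1 n) mul1r.
- by move=> x /mapP [i _ ->].
move=> eps e0.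
have [d1 d10 H1] := close_all uM e0.
pose Pv := fun v s => if (v \in B) || (- v \in B)
             then enorm (v *m Fm M s) = enorm v
             else enorm v < enorm (v *m Fm M s).
have [d2 d20 H2] : exists2 d, 0 < d & forall t, 0 < t -> t < d -> forall v, v \in S -> Pv v t.
  apply: combine => v vS; rewrite /Pv.
  have hv := unit_dot (hunit v vS).
  case hB: ((v \in B) || (- v \in B)).

    exists 1 => // s _ _.
    case/orP: hB => /mapP [k _ hk].
      by rewrite hk !enormE row_Fm // norm_Wrow // hrows.
    have -> : v = - row k M by rewrite -hk opprK.
    by rewrite mulNmx !enormE !dotNN row_Fm // norm_Wrow // hrows.
  set c := v *m invmx M.
  have vc : c *m M = v by rewrite /c mulmxKV.
  have hc : forall k, c 0 k != 0 -> 1 <= `|c 0 k|.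
    move=> k ck.
    have hj : (index v S < size S)%N by rewrite index_mem.
    pose h : {ffun 'I_n -> 'I_(size S)} := [ffun i => if i == k then Ordinal hj else g i].
    have hM : Mof S h = rowrep M k v.
      apply/matrixP => i j; rewrite !mxE ffunE.
      by case: (i == k) => //=; rewrite nth_index.
    have hdet : \det (Mof S h) = c 0 k * \det M by rewrite hM det_rowrep.
    have := hmin h; rewrite hdet mulf_neq0 // => /(_ isT).
    by rewrite normrM ler_pMl // normr_gt0.
  have hgt : 1 < dot c c.
    apply: (@coord_sq_gt1 R n M c hc); first by rewrite vc.
    move=> k; rewrite vc.
    have hkB : row k M \in B by apply: map_f; rewrite mem_enum.
    split; apply/eqP => hk.
      by move: hB; rewrite hk hkB.
    by move: hB; rewrite hk opprK hkB orbT.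
  have [d d0 Hd] := growth uM hv hgt.
  exists d => // s s0 sd.
  rewrite !enormE hv sqrtr1 -{1}sqrtr1 ltr_sqrt; first exact: Hd.
  exact: lt_trans (Hd s s0 sd).
set m := Num.min d1 d2.
have m0 : 0 < m by rewrite lt_min d10.
have [h0 hm] := midf_lt m0.
rewrite add0r in h0 hm.
exists (Fm M (m / 2)); split; first by apply: H1 => //; move: hm; rewrite lt_min => /andP[].
by move=> v vS; apply: H2 => //; move: hm; rewrite lt_min => /andP[].
Qed.
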